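(* In the setting of the context, $$\|\mathcal D\|_\perp\le\big(\lambda_2^{(2)}\lambda_2^{(1)}\big)^2.$$
   Context: Let $x_0\in\mathbb C^n\setminus\{0\}$ and $A=[A_1,A_2]$ with $A_1,A_2\in\mathbb C^{n\times N/2}$ such that each $A_l^*$ is isometric ($A_lA_l^*=I_n$). For $l=1,2$: $b_l=|A_l^*x_0|$, $B_l=A_l\,\mathrm{diag}\big(\frac{A_l^*x_0}{|A_l^*x_0|}\big)$ (componentwise quotient, convention $y(j)/|y(j)|=1$ if $y(j)=0$), $\mathcal B_l=\begin{bmatrix}\Re B_l\\ \Im B_l\end{bmatrix}\in\mathbb R^{2n\times N/2}$, and $\lambda_2^{(l)}=\max\{\|\Im(B_l^*u)\|:u\in\mathbb C^n,\ \Re((iu)^*x_0)=0,\ \|u\|=1\}$. Let $G(v)=\begin{bmatrix}\Re v\\ \Im v\end{bmatrix}\in\mathbb R^{2n}$, $\xi_1=G(x_0)$, $\mathcal D=\mathcal B_2\mathcal B_2^\top\mathcal B_1\mathcal B_1^\top\in\mathbb R^{2n\times 2n}$, and $\|\mathcal D\|_\perp=\max\{\|\mathcal D\xi\|:\xi\in\mathbb R^{2n},\ \xi^\top\xi_1=0,\ \|\xi\|=1\}$. *)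

(* Defs.v *)
(* Complex numbers are modelled by an arbitrary
   numClosedFieldType C (e.g. algC); real quantities are elements of C
   lying in Num.real. *)
From HB Require Import structures.
From mathcomp Require Import all_boot all_order all_algebra.
Set Implicit Arguments. Unset Strict Implicit. Unset Printing Implicit Defensive.
Import Order.TTheory GRing.Theory Num.Theory.
Local Open Scope ring_scope.

Section Defs.
Variable C : numClosedFieldType.

Definition ctr (p q : nat) (M : 'M[C]_(p, q)) : 'M[C]_(q, p) :=
  (map_mx (fun z => z^*) M)^T.

Definition vnorm (p : nat) (v : 'cV[C]_p) : C :=
  sqrtC (\sum_i `|v i 0| ^+ 2).

(* componentwise phase, with y/|y| := 1 when y = 0 *)
Definition phase (y : C) : C := if y == 0 then 1 else y / `|y|.

Definition Bmat (n m : nat) (A : 'M[C]_(n, m)) (x0 : 'cV[C]_n) : 'M[C]_(n, m) :=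
  A *m diag_mx (\row_j phase ((ctr A *m x0) j 0)).

Definition realify (n m : nat) (M : 'M[C]_(n, m)) : 'M[C]_(n + n, m) :=
  col_mx (map_mx (fun z => 'Re z) M) (map_mx (fun z => 'Im z) M).

Definition Gvec (n : nat) (v : 'cV[C]_n) : 'cV[C]_(n + n) := realify v.

Definition calB (n m : nat) (A : 'M[C]_(n, m)) (x0 : 'cV[C]_n) : 'M[C]_(n + n, m) :=
  realify (Bmat A x0).

Definition Dmat (n m : nat) (A1 A2 : 'M[C]_(n, m)) (x0 : 'cV[C]_n) : 'M[C]_(n + n) :=
  calB A2 x0 *m (calB A2 x0)^T *m calB A1 x0 *m (calB A1 x0)^T.

Definition is_max (S : C -> Prop) (r : C) : Prop :=
  S r /\ forall s, S s -> s <= r.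

Definition lambda2_set (n m : nat) (A : 'M[C]_(n, m)) (x0 : 'cV[C]_n) (s : C) : Prop :=
  exists u : 'cV[C]_n,
    'Re ((ctr ('i *: u) *m x0) 0 0) = 0 /\ vnorm u = 1 /\
    s = vnorm (map_mx (fun z => 'Im z) (ctr (Bmat A x0) *m u)).

Definition Dperp_set (n m : nat) (A1 A2 : 'M[C]_(n, m)) (x0 : 'cV[C]_n) (s : C) : Prop :=
  exists xi : 'cV[C]_(n + n),
    (forall i, xi i 0 \is Num.real) /\
    (xi^T *m Gvec x0) 0 0 = 0 /\ vnorm xi = 1 /\
    s = vnorm (Dmat A1 A2 x0 *m xi).

End Defs.

(* Main.v *)
Require Import Defs.
From HB Require Import structures.
From mathcomp Require Import all_boot all_order all_algebra ring.
Import Order.TTheory GRing.Theory Num.Theory.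
Local Open Scope ring_scope.

Module M1.
Set Implicit Arguments. Unset Strict Implicit. Unset Printing Implicit Defensive.

Section Aux.
Variable C : numClosedFieldType.

Definition rmx p q (M : 'M[C]_(p, q)) := forall i j, M i j \is Num.real.
Definition Nm p (v : 'cV[C]_p) : C := \sum_i `|v i 0| ^+ 2.
Definition ip p (a b : 'cV[C]_p) : C := (a^T *m b) 0 0.

Lemma rmxM p q r (M : 'M[C]_(p, q)) (N : 'M[C]_(q, r)) :
  rmx M -> rmx N -> rmx (M *m N).
Proof.
move=> hM hN i j; rewrite mxE; apply: rpred_sum => k _; exact: rpredM.
Qed.

Lemma rmxT p q (M : 'M[C]_(p, q)) : rmx M -> rmx M^T.
Proof. by move=> h i j; rewrite mxE. Qed.

Lemma realify_real p q (M : 'M[C]_(p, q)) : rmx (realify M).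
Proof.
move=> i j; rewrite /realify -[i]splitK; case: (split i) => k /=.
  by rewrite col_mxEu mxE Creal_Re.
by rewrite col_mxEd mxE Creal_Im.
Qed.

Lemma Nm_ge0 p (v : 'cV[C]_p) : 0 <= Nm v.
Proof. by apply: sumr_ge0 => i _; rewrite exprn_ge0. Qed.

Lemma Nm_ip p (v : 'cV[C]_p) : rmx v -> Nm v = ip v v.
Proof.
move=> hv; rewrite /ip mxE; apply: eq_bigr => i _.
by rewrite mxE real_normK // expr2.
Qed.

Lemma ipC p (a b : 'cV[C]_p) : ip a b = ip b a.
Proof. by rewrite /ip !mxE; apply: eq_bigr => i _; rewrite !mxE mulrC. Qed.

Lemma ip_real p (a b : 'cV[C]_p) : rmx a -> rmx b -> ip a b \is Num.real.
Proof. by move=> ha hb; apply: rmxM => //; apply: rmxT. Qed.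

Lemma CS p (a b : 'cV[C]_p) : rmx a -> rmx b ->
  ip a b ^+ 2 <= ip a a * ip b b.
Proof.
move=> ha hb.
have [H _] := CauchySchwarz (@dotmx C p) a^T b^T.
have E : forall u v : 'cV[C]_p, rmx v -> dotmx u^T v^T = ip u v.
  move=> u v hv; rewrite dotmxE /ip !mxE; apply: eq_bigr => i _.
  by rewrite !mxE conj_Creal.
have H' : `|dotmx a^T b^T| ^+ 2 <= dotmx a^T a^T * dotmx b^T b^T := H.
by move: H'; rewrite !E // real_normK //; apply: ip_real.
Qed.

End Aux.

End M1.
Import M1.

Module M2.
Set Implicit Arguments. Unset Strict Implicit. Unset Printing Implicit Defensive.

Section Aux2.
Variable C : numClosedFieldType.
Variables (n m : nat) (A : 'M[C]_(n, m)) (x0 : 'cV[C]_n).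

Lemma ctrE p q (M : 'M[C]_(p, q)) i j : ctr M i j = (M j i)^*.
Proof. by rewrite !mxE. Qed.

Lemma BmatE i j : Bmat A x0 i j = A i j * phase ((ctr A *m x0) j 0).
Proof. by rewrite /Bmat mul_mx_diag !mxE. Qed.

Lemma phase_unit (y : C) : phase y * (phase y)^* = 1.
Proof.
rewrite /phase; case: eqP => [_|/eqP y0]; first by rewrite conjC1 mulr1.
have ny0 : `|y| != 0 by rewrite normr_eq0.
rewrite rmorphM /= fmorphV /= conj_normC mulrACA -normCK.
by rewrite -invfM -expr2 divff // expf_neq0.
Qed.

Lemma phase_real (y : C) : (phase y)^* * y \is Num.real.
Proof.
rewrite /phase; case: eqP => [->|/eqP y0]; first by rewrite mulr0 rpred0.
rewrite rmorphM /= fmorphV /= conj_normC mulrAC -normCKC.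
by rewrite rpredM ?rpredV ?rpredX ?normr_real.
Qed.

Lemma BctrB : A *m ctr A = 1%:M -> Bmat A x0 *m ctr (Bmat A x0) = 1%:M.
Proof.
move=> hA; rewrite -hA; apply/matrixP => i k; rewrite !mxE.
apply: eq_bigr => j _; rewrite !ctrE !BmatE rmorphM /=.
by rewrite mulrACA phase_unit mulr1.
Qed.

Lemma ctrBx_real : rmx (ctr (Bmat A x0) *m x0).
Proof.
move=> j k; rewrite (ord1 k) mxE.
have -> : \sum_i ctr (Bmat A x0) j i * x0 i 0 =
   (phase ((ctr A *m x0) j 0))^* * (ctr A *m x0) j 0.
  rewrite [X in _ = _ * X]mxE mulr_sumr; apply: eq_bigr => i _.
  by rewrite !ctrE BmatE rmorphM /= mulrAC mulrC.
exact: phase_real.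
Qed.

Lemma calBT_G (v : 'cV[C]_n) :
  (calB A x0)^T *m Gvec v = map_mx (fun z => 'Re z) (ctr (Bmat A x0) *m v).
Proof.
apply/matrixP => j k; rewrite !mxE big_split_ord /= raddf_sum /=.
rewrite -big_split /=; apply: eq_bigr => i _.
rewrite !mxE /calB /realify /Gvec.
rewrite (unsplitK (inl _ : 'I_n + 'I_n)) (unsplitK (inr _ : 'I_n + 'I_n)) !mxE.
by rewrite ReM Re_conj Im_conj mulNr opprK.
Qed.

Lemma calB_real (w : 'cV[C]_m) : rmx w ->
  calB A x0 *m w = Gvec (Bmat A x0 *m w).
Proof.
move=> hw; rewrite /calB /Gvec /realify mul_col_mx; congr col_mx.
  apply/matrixP => i k; rewrite !mxE raddf_sum; apply: eq_bigr => j _.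
  rewrite !mxE; exact/esym/ReMr/hw.
apply/matrixP => i k; rewrite !mxE raddf_sum; apply: eq_bigr => j _.
rewrite !mxE; exact/esym/ImMr/hw.
Qed.

Lemma map_Re_real p (v : 'cV[C]_p) : rmx v -> map_mx (fun z => 'Re z) v = v.
Proof. by move=> h; apply/matrixP => i j; rewrite mxE; apply/Creal_ReP. Qed.

Lemma P_fix : A *m ctr A = 1%:M ->
  calB A x0 *m (calB A x0)^T *m Gvec x0 = Gvec x0.
Proof.
move=> hA; rewrite -mulmxA calBT_G map_Re_real; last exact: ctrBx_real.
rewrite calB_real; last exact: ctrBx_real.
by rewrite mulmxA BctrB // mul1mx.
Qed.

End Aux2.

End M2.
Import M2.

Module M3.
Set Implicit Arguments. Unset Strict Implicit. Unset Printing Implicit Defensive.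

Section Aux3.
Variable C : numClosedFieldType.

Lemma NmZ p (c : C) (v : 'cV[C]_p) : Nm (c *: v) = `|c| ^+ 2 * Nm v.
Proof.
rewrite /Nm mulr_sumr; apply: eq_bigr => i _.
by rewrite mxE normrM exprMn.
Qed.

Lemma ctrZ p q (c : C) (M : 'M[C]_(p, q)) : ctr (c *: M) = c^* *: ctr M.
Proof. by apply/matrixP => i j; rewrite !mxE rmorphM. Qed.

Lemma ipG p (u w : 'cV[C]_p) :
  ip (Gvec u) (Gvec w) = 'Re ((ctr u *m w) 0 0).
Proof.
rewrite /ip !mxE big_split_ord /= raddf_sum /=.
rewrite -big_split /=; apply: eq_bigr => i _.
rewrite !mxE /Gvec /realify.
rewrite (unsplitK (inl _ : 'I_p + 'I_p)) (unsplitK (inr _ : 'I_p + 'I_p)) !mxE.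
by rewrite ReM Re_conj Im_conj mulNr opprK.
Qed.

Lemma NmG p (u : 'cV[C]_p) : Nm (Gvec u) = Nm u.
Proof.
rewrite /Nm big_split_ord /= -big_split /=; apply: eq_bigr => i _.
rewrite /Gvec /realify !mxE.
rewrite (unsplitK (inl _ : 'I_p + 'I_p)) (unsplitK (inr _ : 'I_p + 'I_p)) !mxE.
by rewrite [RHS]normC2_Re_Im !real_normK ?Creal_Re ?Creal_Im.
Qed.

Lemma Nm_eq0 p (v : 'cV[C]_p) : Nm v = 0 -> v = 0.
Proof.
move=> h; apply/matrixP => i j; rewrite (ord1 j) mxE.
have := psumr_eq0P (fun i _ => exprn_ge0 2 (normr_ge0 (v i 0))) h (i:=i) isT.
by move/eqP; rewrite expf_eq0 /= normr_eq0 => /eqP.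
Qed.

Lemma real_G p (eta : 'cV[C]_(p + p)) : rmx eta ->
  eta = Gvec (usubmx eta + 'i *: dsubmx eta).
Proof.
move=> he; rewrite -[LHS](vsubmxK eta) /Gvec /realify; congr col_mx.
  apply/matrixP => i j; rewrite !mxE Re_rect //; exact: he.
apply/matrixP => i j; rewrite !mxE Im_rect //; exact: he.
Qed.

Variables (n m : nat) (A : 'M[C]_(n, m)) (x0 : 'cV[C]_n).

Lemma lam_ge0 lam : is_max (lambda2_set A x0) lam -> 0 <= lam.
Proof.
by case=> [[u [_ [_ ->]]] _]; rewrite /vnorm sqrtC_ge0; apply: (Nm_ge0 _).
Qed.

Lemma lam_bound lam : is_max (lambda2_set A x0) lam ->
  forall eta : 'cV[C]_(n + n), rmx eta -> ip eta (Gvec x0) = 0 ->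
  Nm ((calB A x0)^T *m eta) <= lam ^+ 2 * Nm eta.
Proof.
move=> hlam eta he ho.
set v := usubmx eta + 'i *: dsubmx eta.
have ev : eta = Gvec v by apply: real_G.
rewrite ev calBT_G NmG.
rewrite ev ipG in ho.
have [N0|Npos] : Nm v = 0 \/ 0 < Nm v.
  by move: (Nm_ge0 v); rewrite le_eqVlt => /orP[/eqP<-|]; [left|right].
  rewrite (Nm_eq0 N0) mulmx0.
  have -> : map_mx (fun z => 'Re z) (0 : 'cV[C]_m) = 0.
    by apply/matrixP => i j; rewrite !mxE raddf0.
  by rewrite /Nm !big1 ?mulr0 // => i _; rewrite mxE normr0 expr0n.
have lam0 := lam_ge0 hlam.
set s := sqrtC (Nm v).
have s0 : 0 < s by rewrite sqrtC_gt0.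
have sR : s^-1 \is Num.real by rewrite rpredV gtr0_real.
have s2 : s ^+ 2 = Nm v by rewrite sqrtCK.
set u := s^-1 *: (- 'i *: v).
have iu : 'i *: u = s^-1 *: v.
  have key : 'i * - 'i = 1 :> C by rewrite mulrN -expr2 sqrCi opprK.
  by rewrite /u !scalerA mulrAC key mul1r.
have ns : `|s^-1| ^+ 2 = s^-2 by rewrite ger0_norm ?invr_ge0 ?ltW // exprVn.
have H1 : 'Re ((ctr ('i *: u) *m x0) 0 0) = 0.
  rewrite iu ctrZ -scalemxAl mxE conj_Creal // ReMl //.
  by rewrite ho mulr0.
have H2 : vnorm u = 1.
  rewrite /vnorm -/(Nm u) /u !NmZ normrN normCi expr1n mul1r ns -s2.
  by rewrite mulVf ?sqrtC1 // expf_neq0 // gt_eqF.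
have H3 : Nm (map_mx (fun z => 'Im z) (ctr (Bmat A x0) *m u)) =
          s^-2 * Nm (map_mx (fun z => 'Re z) (ctr (Bmat A x0) *m v)).
  rewrite /Nm mulr_sumr; apply: eq_bigr => i _.
  rewrite /u -!scalemxAr !mxE ImMl // mulNr raddfN /= ImMil.
  by rewrite normrM normrN exprMn ns.
have := hlam.2 _ (ex_intro _ u (conj H1 (conj H2 erefl))).
rewrite /vnorm -/(Nm _) H3 => hle.
have hle2 : s^-2 * Nm (map_mx (fun z => 'Re z) (ctr (Bmat A x0) *m v)) <= lam ^+ 2.
  rewrite -[X in X <= _](sqrtCK).
  by apply: lerXn2r; rewrite // nnegrE ?sqrtC_ge0 // mulr_ge0 ?Nm_ge0 // invr_ge0 exprn_ge0 // ltW.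
rewrite -s2 mulrC.
have sp : 0 < s ^+ 2 by rewrite exprn_gt0.
have spi : 0 < (s ^+ 2)^-1 by rewrite invr_gt0.
rewrite -(ler_pM2l spi) mulrA mulVf ?gt_eqF // mul1r.
exact: hle2.
Qed.

End Aux3.

End M3.
Import M3.

Module M4.
Set Implicit Arguments. Unset Strict Implicit. Unset Printing Implicit Defensive.

Section Aux4.
Variable C : numClosedFieldType.
Variables (n m : nat) (A : 'M[C]_(n, m)) (x0 : 'cV[C]_n).

Lemma keyP lam : A *m ctr A = 1%:M -> is_max (lambda2_set A x0) lam ->
  forall eta : 'cV[C]_(n + n), rmx eta -> ip eta (Gvec x0) = 0 ->
  let w := calB A x0 *m (calB A x0)^T *m eta in
  [/\ rmx w, ip w (Gvec x0) = 0 & Nm w <= lam ^+ 4 * Nm eta].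
Proof.
move=> hA hlam eta he ho w.
set M := calB A x0.
have MR : rmx M by apply: realify_real.
have wR : rmx w by apply: rmxM => //; apply: rmxM => //; apply: rmxT.
have wo : ip w (Gvec x0) = 0.
  rewrite /ip /w trmx_mul trmx_mul trmxK -!mulmxA mulmxA.
  by rewrite -mulmxA [calB A x0 *m _]mulmxA P_fix // -/(ip eta _) ho.
split => //.
set a := M^T *m w; set b := M^T *m eta.
have aR : rmx a by apply: rmxM => //; apply: rmxT.
have bR : rmx b by apply: rmxM => //; apply: rmxT.
have Ew : Nm w = ip a b.
  rewrite Nm_ip // /ip /a /b [in RHS]trmx_mul trmxK -[in RHS]mulmxA [in RHS](mulmxA M).
  by [].
have hcs := CS aR bR.
rewrite -!Nm_ip // -Ew in hcs.
have ha := lam_bound hlam wR wo.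
have hb := lam_bound hlam he ho.
have lam0 := lam_ge0 hlam.
have h2 : Nm w * Nm w <= Nm w * (lam ^+ 4 * Nm eta).
  rewrite -expr2; apply: (le_trans hcs).
  rewrite (_ : lam ^+ 4 = lam ^+ 2 * lam ^+ 2); last by rewrite -exprD.
  rewrite (_ : Nm w * _ = (lam ^+ 2 * Nm w) * (lam ^+ 2 * Nm eta)); last by ring.
  by apply: ler_pM => //; exact: Nm_ge0.
have [N0|Npos] : Nm w = 0 \/ 0 < Nm w.
  by move: (Nm_ge0 w); rewrite le_eqVlt => /orP[/eqP<-|]; [left|right].
  by rewrite N0 mulr_ge0 ?exprn_ge0 ?Nm_ge0.
by rewrite -(ler_pM2l Npos).
Qed.
End Aux4.

End M4.
Import M4.


Theorem mainTheorem12 (C : numClosedFieldType) (n m : nat)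
    (A1 A2 : 'M[C]_(n, m)) (x0 : 'cV[C]_n) :
  x0 != 0 ->
  A1 *m ctr A1 = 1%:M ->
  A2 *m ctr A2 = 1%:M ->
  forall lam1 lam2 dperp : C,
    is_max (lambda2_set A1 x0) lam1 ->
    is_max (lambda2_set A2 x0) lam2 ->
    is_max (Dperp_set A1 A2 x0) dperp ->
    dperp <= (lam2 * lam1) ^+ 2.
Proof.
move=> _ hA1 hA2 lam1 lam2 dperp h1 h2 [[xi [xiR [xio [xin ->]]]] _].
have xR : rmx xi by move=> i j; rewrite (ord1 j).
have xo : ip xi (Gvec x0) = 0 by exact: xio.
have [w1R w1o w1N] := keyP hA1 h1 xR xo.
have [_ _ w2N] := keyP hA2 h2 w1R w1o.
have ED : Dmat A1 A2 x0 *m xi = calB A2 x0 *m (calB A2 x0)^T *m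
   (calB A1 x0 *m (calB A1 x0)^T *m xi) by rewrite /Dmat !mulmxA.
have N1 : Nm xi = 1 by rewrite -(sqrtCK (Nm xi)); move: xin; rewrite /vnorm => ->; rewrite expr1n.
have l1 := lam_ge0 h1; have l2 := lam_ge0 h2.
have hN : Nm (Dmat A1 A2 x0 *m xi) <= ((lam2 * lam1) ^+ 2) ^+ 2.
  rewrite ED; apply: (le_trans w2N).
  rewrite (_ : ((lam2 * lam1) ^+ 2) ^+ 2 = lam2 ^+ 4 * (lam1 ^+ 4 * Nm xi)); last first.
    by rewrite N1; ring.
  by rewrite ler_wpM2l ?exprn_ge0.
rewrite /vnorm -/(Nm _) -[X in _ <= X](@sqrCK _ ((lam2 * lam1) ^+ 2)); last first.
  by rewrite exprn_ge0 ?mulr_ge0.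
by rewrite ler_sqrtC // nnegrE ?Nm_ge0 ?exprn_ge0 ?mulr_ge0.
Qed.
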